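(* Let $\pi_0$ be a policy, $\epsilon\in(0,1)$, $\lambda>0$, and $\pi^*(a|s)=\left(1+\epsilon\tanh(\tilde A_{\pi_0}(s,a)/(2\lambda))\right)\pi_0(a|s)$ with $\tilde A_{\pi_0}(s,a)=Q_{\pi_0}(s,a)-\mu_{\pi_0}(s)$, where $\mu_{\pi_0}(s)$ satisfies $\mathbb{E}_{a\sim\pi_0(\cdot|s)}[\tanh(\tilde A_{\pi_0}(s,a)/(2\lambda))]=0$. For a policy $\pi_\theta$ define $L^{\pi_\theta}_{\pi_0}(s)=\mathbb{E}_{a\sim\pi_\theta(\cdot|s)}[Q_{\pi_0}(s,a)]$ and $D^{ATV}_\theta(s)=\sum_a|(\pi_\theta(a|s)-\pi^*(a|s))A_{\pi_0}(s,a)|$. Then for every state $s$, $$L^{\pi_\theta}_{\pi_0}(s)\ge V_{\pi_0}(s)+\epsilon\,\mathbb{E}_{a\sim\pi_0(\cdot|s)}\left[\tanh\!\left(\frac{\tilde A_{\pi_0}(s,a)}{2\lambda}\right)\tilde A_{\pi_0}(s,a)\right]-D^{ATV}_\theta(s).$$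
   Context: Discounted MDP with discount $\gamma\in(0,1)$; for a policy $\pi$, $V_\pi(s)$ and $Q_\pi(s,a)$ are the expected discounted returns starting from state $s$ (resp. from $s$ with first action $a$) and following $\pi$ thereafter; $A_\pi=Q_\pi-V_\pi$. Sums over actions are replaced by integrals for continuous action spaces. *)

(* Defs.v *)
From HB Require Import structures.
From mathcomp Require Import all_boot all_order all_algebra.
From mathcomp Require Import all_classical all_reals all_analysis.
Set Implicit Arguments. Unset Strict Implicit. Unset Printing Implicit Defensive.
Import Order.TTheory GRing.Theory Num.Theory.
Local Open Scope ring_scope.

Section MDP.
Variables (R : realType) (S A : finType).

Definition tanh (x : R) : R := (expR x - expR (- x)) / (expR x + expR (- x)).

(* a (stochastic) policy pi(a|s) is written pi s a *)
Definition is_policy (pi : S -> A -> R) : Prop :=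
  (forall s a, 0 <= pi s a) /\ (forall s, \sum_a pi s a = 1).

Definition is_kernel (P : S -> A -> S -> R) : Prop :=
  (forall s a s', 0 <= P s a s') /\ (forall s a, \sum_s' P s a s' = 1).

Variables (P : S -> A -> S -> R) (r : S -> A -> R) (gamma : R).

Fixpoint exp_reward (pi : S -> A -> R) (t : nat) (s : S) : R :=
  match t with
  | 0 => \sum_a pi s a * r s a
  | t'.+1 => \sum_a pi s a * \sum_s' P s a s' * exp_reward pi t' s'
  end.

Definition Vf (pi : S -> A -> R) (s : S) : R :=
  limn (fun n => \sum_(0 <= t < n) gamma ^+ t * exp_reward pi t s).

Definition Qf (pi : S -> A -> R) (s : S) (a : A) : R :=
  r s a + gamma * \sum_s' P s a s' * Vf pi s'.

Definition Af (pi : S -> A -> R) (s : S) (a : A) : R := Qf pi s a - Vf pi s.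

End MDP.

(* Main.v *)
Require Import Defs.
From HB Require Import structures.
From mathcomp Require Import all_boot all_order all_algebra.
From mathcomp Require Import all_classical all_reals all_analysis.
Import Order.TTheory GRing.Theory Num.Theory.
Local Open Scope ring_scope.

From mathcomp Require Import ring lra.

Section Helpers.
Import numFieldNormedType.Exports.
Local Open Scope classical_set_scope.
Local Open Scope ring_scope.
Lemma exp_reward_bound (R : realType) (S A : finType)
  (P : S -> A -> S -> R) (r : S -> A -> R) (pi : S -> A -> R)
  (hP : is_kernel P) (hpi : is_policy pi) :
  forall t s, `|exp_reward P r pi t s| <= \sum_s0 \sum_a0 `|r s0 a0|.
Proof.
set M := \sum_s0 \sum_a0 `|r s0 a0|.
have rM : forall s a, `|r s a| <= M.
  move=> s a; rewrite /M (bigD1 s) //= (bigD1 a) //= -addrA lerDl.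
  by rewrite addr_ge0 // sumr_ge0 // => *; rewrite sumr_ge0.
case: hP => P0 P1; case: hpi => p0 p1.
elim=> [|t IH] s /=.
  apply: le_trans (ler_norm_sum _ _ _) _.
  rewrite -[M]mul1r -(p1 s) mulr_suml; apply: ler_sum => a _.
  by rewrite normrM ger0_norm // ler_wpM2l.
apply: le_trans (ler_norm_sum _ _ _) _.
rewrite -[M]mul1r -(p1 s) mulr_suml; apply: ler_sum => a _.
rewrite normrM ger0_norm // ler_wpM2l //.
apply: le_trans (ler_norm_sum _ _ _) _.
rewrite -[M]mul1r -(P1 s a) mulr_suml; apply: ler_sum => s' _.
by rewrite normrM ger0_norm // ler_wpM2l.
Qed.


Lemma cvg_Vser (R : realType) (S A : finType)
  (P : S -> A -> S -> R) (r : S -> A -> R) (gamma : R) (pi : S -> A -> R)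
  (hP : is_kernel P) (hpi : is_policy pi) (hg : 0 < gamma < 1) s :
  cvgn (series (fun t => gamma ^+ t * exp_reward P r pi t s)).
Proof.
case/andP: hg => g0 g1.
apply: (@normed_cvg _ R^o).
set M := \sum_s0 \sum_a0 `|r s0 a0|.
apply: (@series_le_cvg _ _ (geometric M gamma)).
- by move=> n; rewrite normr_ge0.
- move=> n; rewrite /geometric /= mulr_ge0 //; last by rewrite exprn_ge0 // ltW.
  by apply: sumr_ge0 => *; apply: sumr_ge0.
- move=> n /=; have g0' : 0 <= gamma by exact: ltW.
  rewrite normrM (ger0_norm (exprn_ge0 _ g0')) mulrC.
  by rewrite ler_wpM2r ?exprn_ge0 // exp_reward_bound.
- by apply: is_cvg_geometric_series; rewrite ger0_norm // ltW.
Qed.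

Lemma bellman_step (R : realType) (S A : finType)
  (P : S -> A -> S -> R) (r : S -> A -> R) (gamma : R) (pi : S -> A -> R) n s :
  series (fun t => gamma ^+ t * exp_reward P r pi t s) n.+1 =
  \sum_a pi s a * (r s a + gamma * \sum_s' P s a s' *
        series (fun t => gamma ^+ t * exp_reward P r pi t s') n).
Proof.
rewrite /series /= big_nat_recl //= expr0 mul1r.
under [RHS]eq_bigr do rewrite mulrDr.
rewrite big_split /=; congr (_ + _).
pose F t a s' := gamma ^+ t * gamma * pi s a * P s a s' * exp_reward P r pi t s'.
transitivity (\sum_(0 <= t < n) \sum_a \sum_s' F t a s').
  apply: eq_bigr => t _; rewrite exprSr -mulrA !mulr_sumr; apply: eq_bigr => a _.
  rewrite !mulr_sumr; apply: eq_bigr => s' _; rewrite /F; ring.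
rewrite exchange_big /=; apply: eq_bigr => a _.
rewrite exchange_big /= !mulr_sumr; apply: eq_bigr => s' _.
rewrite !mulr_sumr; apply: eq_bigr => t _; rewrite /F; ring.
Qed.


Lemma bellman (R : realType) (S A : finType)
  (P : S -> A -> S -> R) (r : S -> A -> R) (gamma : R) (pi : S -> A -> R)
  (hP : is_kernel P) (hpi : is_policy pi) (hg : 0 < gamma < 1) s :
  Vf P r gamma pi s = \sum_a pi s a * Qf P r gamma pi s a.
Proof.
pose u s := series (fun t => gamma ^+ t * exp_reward P r pi t s).
have hu : forall s, u s @ \oo --> Vf P r gamma pi s.
  by move=> s'; rewrite /Vf; apply: cvg_Vser.
have h1 : (fun n => u s n.+1) @ \oo --> Vf P r gamma pi s.
  by have := cvg_shiftS (u s) (nbhs (Vf P r gamma pi s)); rewrite /= => ->; exact: hu.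
have h2 : (fun n => u s n.+1) @ \oo --> \sum_a pi s a * Qf P r gamma pi s a.
  rewrite (_ : (fun n => u s n.+1) = fun n => \sum_a pi s a * (r s a + gamma *
        \sum_s' P s a s' * u s' n)); last first.
    by apply: funext => n; rewrite /u bellman_step.
  apply: (@cvg_big _ _ +%R 0 xpredT add_continuous) => // a _.
  rewrite /Qf; apply: cvgM; first exact: cvg_cst.
  apply: cvgD; first exact: cvg_cst.
  apply: cvgM; first exact: cvg_cst.
  apply: (@cvg_big _ _ +%R 0 xpredT add_continuous) => // s' _.
  apply: cvgM; first exact: cvg_cst.
  exact: hu.
exact: (cvg_unique _ h1 h2).
Qed.

End Helpers.

Theorem lemma2 (R : realType) (S A : finType)
  (P : S -> A -> S -> R) (r : S -> A -> R) (gamma : R)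
  (hP : is_kernel P) (hgamma : 0 < gamma < 1)
  (pi0 pith : S -> A -> R) (hpi0 : is_policy pi0) (hpith : is_policy pith)
  (eps lam : R) (heps : 0 < eps < 1) (hlam : 0 < lam)
  (mu : S -> R)
  (hmu : forall s, \sum_a pi0 s a * tanh ((Qf P r gamma pi0 s a - mu s) / (2 * lam)) = 0)
  (s : S) :
  let Atil := fun a => Qf P r gamma pi0 s a - mu s in
  let pistar := fun a => (1 + eps * tanh (Atil a / (2 * lam))) * pi0 s a in
  let L := \sum_a pith s a * Qf P r gamma pi0 s a in
  let DATV := \sum_a `|(pith s a - pistar a) * Af P r gamma pi0 s a| in
  L >= Vf P r gamma pi0 s
       + eps * (\sum_a pi0 s a * (tanh (Atil a / (2 * lam)) * Atil a)) - DATV.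
Proof.
pose Atil := fun a => Qf P r gamma pi0 s a - mu s.
pose pistar := fun a => (1 + eps * tanh (Atil a / (2 * lam))) * pi0 s a.
pose L := \sum_a pith s a * Qf P r gamma pi0 s a.
pose DATV := \sum_a `|(pith s a - pistar a) * Af P r gamma pi0 s a|.
change (Vf P r gamma pi0 s + eps * (\sum_a pi0 s a * (tanh (Atil a / (2 * lam)) * Atil a)) - DATV <= L).
set V := Vf P r gamma pi0 s.
set Q := Qf P r gamma pi0 s.
set T := fun a => tanh (Atil a / (2 * lam)).
have hV : V = \sum_a pi0 s a * Q a by apply: bellman.
have h0 : \sum_a pi0 s a * T a = 0 by exact: hmu.
have h1 : \sum_a pi0 s a = 1 by case: hpi0.
have h2 : \sum_a pith s a = 1 by case: hpith.
have E : \sum_a (pith s a * Q a - pi0 s a * Q a - eps * (pi0 s a * (T a * Atil a))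
          - (pith s a - pistar a) * Af P r gamma pi0 s a)
       = V * \sum_a pith s a - V * \sum_a pi0 s a + eps * (mu s - V) * \sum_a pi0 s a * T a.
  rewrite !mulr_sumr -sumrB -big_split /=; apply: eq_bigr => a _.
  rewrite /pistar /Af /Atil -/Q -/V /T /Atil; ring.
rewrite h0 h1 h2 !sumrB -mulr_sumr -hV -/L in E.
have HD : - DATV <= \sum_a (pith s a - pistar a) * Af P r gamma pi0 s a.
  rewrite /DATV -sumrN; apply: ler_sum => a _.
  by rewrite lerNl -normrN ler_norm.
have : L - V - eps * (\sum_a pi0 s a * (T a * Atil a)) - \sum_a (pith s a - pistar a) * Af P r gamma pi0 s a = 0.
  by rewrite E; ring.
rewrite /T; lra.
Qed.
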